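(* Let $M$ be a finite MDP with fairness setup and $p_{\mathrm{maj}},p_{\mathrm{min}}>0$. Let $R_{\max}>0$ satisfy $|R_{s,a}|\le R_{\max}$ and $|\rho_{s,a}|\le R_{\max}$ for all $s,a$. Let $\epsilon>0$, $\sigma\in(0,1/2]$, and let $T$ be a positive integer with $\dfrac{\gamma^TR_{\max}}{1-\gamma}\le\dfrac{\sigma^2\epsilon}{4}$. Let $\pi^*$ be a maximizer of $R^{(\pi)}$ over $\pi\in\Pi_{\mathrm{DP},(1-\sigma)^2\epsilon}$ and let $\tilde\pi^*$ be a maximizer of $\tilde R^{(\pi)}$ over $\pi\in\tilde\Pi_{\mathrm{DP},(1-\sigma)\epsilon}$ (both assumed to exist). Then $\tilde\pi^*\in\Pi_{\mathrm{DP},\epsilon}$ and $R^{(\pi^* )}-R^{(\tilde\pi^* )}\le\sigma^2\epsilon/2$.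
   Context: A finite MDP is $M=(S,A,D,P,R,\gamma)$ where $S,A$ are finite nonempty sets, $D$ is a probability distribution on $S$, $P_{s,a,s'}\ge 0$ with $\sum_{s'}P_{s,a,s'}=1$ for all $s,a$, $R\in\mathbb{R}^{S\times A}$, and $\gamma\in(0,1)$. A policy is $\pi\in\mathbb{R}^{S\times A}$ with $\pi_{s,a}\ge0$ and $\sum_a\pi_{s,a}=1$. Let $P^{(\pi)}_{s,s'}=\sum_a\pi_{s,a}P_{s,a,s'}$. For a distribution $\mu$ on $S$ set $\mu^{(\pi,0)}=\mu$, $\mu^{(\pi,t)}_{s'}=\sum_s\mu^{(\pi,t-1)}_sP^{(\pi)}_{s,s'}$, and $\mu^{(\pi)}=(1-\gamma)\sum_{t\ge0}\gamma^t\mu^{(\pi,t)}$. Write $D^{(\pi,t)},D^{(\pi)}$ for $\mu=D$, $\Lambda^{(\pi)}_{s,a}=D^{(\pi)}_s\pi_{s,a}$, and $R^{(\pi)}=(1-\gamma)^{-1}\sum_{s,a}\Lambda^{(\pi)}_{s,a}R_{s,a}$. Fairness setup: $S=Z\times\tilde S$ with $Z=\{\mathrm{maj},\mathrm{min}\}$ and $\tilde S$ finite nonempty; agent rewards $\rho\in\mathbb{R}^{S\times A}$. For $z\in Z$, $p_z=\sum_{\tilde s}D_{(z,\tilde s)}$, $D_z$ is the distribution $(D_z)_s=D_s\cdot\mathbb{I}[s=(z,\tilde s)\text{ for some }\tilde s]/p_z$, $D_z^{(\pi,t)},D_z^{(\pi)}$ are $\mu^{(\pi,t)},\mu^{(\pi)}$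 for $\mu=D_z$, $(\Lambda_z^{(\pi)})_{s,a}=(D_z^{(\pi)})_s\pi_{s,a}$, and $\rho_z^{(\pi)}=\sum_{s,a}(\Lambda_z^{(\pi)})_{s,a}\rho_{s,a}$. For $\eta\ge0$, $\Pi_{\mathrm{DP},\eta}$ is the set of policies with $|\rho_{\mathrm{maj}}^{(\pi)}-\rho_{\mathrm{min}}^{(\pi)}|\le\eta$. Truncated quantities: $\tilde R^{(\pi)}=\sum_{t=0}^{T-1}\gamma^t\sum_{s,a}D^{(\pi,t)}_s\pi_{s,a}R_{s,a}$, $\tilde\rho_z^{(\pi)}=(1-\gamma)\sum_{t=0}^{T-1}\gamma^t\sum_{s,a}(D_z^{(\pi,t)})_s\pi_{s,a}\rho_{s,a}$, and $\tilde\Pi_{\mathrm{DP},\eta}$ is the set of policies with $|\tilde\rho_{\mathrm{maj}}^{(\pi)}-\tilde\rho_{\mathrm{min}}^{(\pi)}|\le\eta$. *)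

(* Defs.v *)
From HB Require Import structures.
From Stdlib Require Import Reals ClassicalEpsilon.
From mathcomp Require Import all_boot.

Set Implicit Arguments.
Unset Strict Implicit.
Unset Printing Implicit Defensive.

Local Open Scope R_scope.

Lemma Rplus_assoc' : associative Rplus.
Proof. intros x y z; symmetry; apply Rplus_assoc. Qed.
Lemma Rplus_comm' : commutative Rplus.
Proof. intros x y; apply Rplus_comm. Qed.
Lemma Rplus_0_l' : left_id (IZR 0) Rplus.
Proof. intros x; apply Rplus_0_l. Qed.
HB.instance Definition _ := Monoid.isComLaw.Build R (IZR 0) Rplus
  Rplus_assoc' Rplus_comm' Rplus_0_l'.

Notation "\rsum_ ( i : T ) F" := (\big[Rplus/IZR 0]_(i : T) F)
  (at level 41, F at level 41, i, T at level 50) : R_scope.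
Notation "\rsum_ ( i < n ) F" := (\big[Rplus/IZR 0]_(i < n) F)
  (at level 41, F at level 41, i, n at level 50) : R_scope.

(* Value of a convergent real series sum_{t>=0} u t (the limit of the partial
   sums sum_f_R0 u N = u 0 + ... + u N), chosen by classical description;
   it is only applied to convergent series here. *)
Definition series (u : nat -> R) : R :=
  epsilon (inhabits 0) (fun l => Un_cv (fun N => sum_f_R0 u N) l).

Section MDP.
Variables (S A : finType).

Definition is_dist (mu : S -> R) : Prop :=
  (forall s, 0 <= mu s) /\ \rsum_(s : S) mu s = 1.

Definition is_transition (P : S -> A -> S -> R) : Prop :=
  (forall s a s', 0 <= P s a s') /\ (forall s a, \rsum_(s' : S) P s a s' = 1).

Definition is_policy (pi : S -> A -> R) : Prop :=
  (forall s a, 0 <= pi s a) /\ (forall s, \rsum_(a : A) pi s a = 1).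

Definition Ppi (P : S -> A -> S -> R) (pi : S -> A -> R) (s s' : S) : R :=
  \rsum_(a : A) pi s a * P s a s'.

Fixpoint mu_t (P : S -> A -> S -> R) (pi : S -> A -> R) (mu : S -> R) (t : nat)
  : S -> R :=
  match t with
  | O => mu
  | Datatypes.S t' => fun s' => \rsum_(s : S) mu_t P pi mu t' s * Ppi P pi s s'
  end.

Definition occ (gamma : R) (P : S -> A -> S -> R) (pi : S -> A -> R)
  (mu : S -> R) (s : S) : R :=
  (1 - gamma) * series (fun t => gamma ^ t * mu_t P pi mu t s).

Definition Lam (gamma : R) (P : S -> A -> S -> R) (D : S -> R)
  (pi : S -> A -> R) (s : S) (a : A) : R :=
  occ gamma P pi D s * pi s a.

Definition Rval (gamma : R) (P : S -> A -> S -> R) (D : S -> R)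
  (Rw : S -> A -> R) (pi : S -> A -> R) : R :=
  / (1 - gamma) * \rsum_(s : S) \rsum_(a : A) Lam gamma P D pi s a * Rw s a.

Definition Rtil (gamma : R) (T : nat) (P : S -> A -> S -> R) (D : S -> R)
  (Rw : S -> A -> R) (pi : S -> A -> R) : R :=
  \rsum_(t < T) gamma ^ t *
     \rsum_(s : S) \rsum_(a : A) mu_t P pi D t s * pi s a * Rw s a.
End MDP.

(* Fairness setup: S = Z x St with Z = {maj, min}; we encode maj = true,
   min = false. *)
Definition maj : bool := true.
Definition min : bool := false.

Section Fair.
Variables (St A : finType).
Local Notation S := (bool * St)%type.

Definition pz (D : S -> R) (z : bool) : R :=
  \rsum_(s : St) D (z, s).

Definition Dz (D : S -> R) (z : bool) (s : S) : R :=
  if s.1 == z then D s / pz D z else 0.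

Definition rhoz (gamma : R) (P : S -> A -> S -> R) (D : S -> R)
  (rho : S -> A -> R) (pi : S -> A -> R) (z : bool) : R :=
  \rsum_(s : S) \rsum_(a : A) occ gamma P pi (Dz D z) s * pi s a * rho s a.

Definition rhoz_til (gamma : R) (T : nat) (P : S -> A -> S -> R) (D : S -> R)
  (rho : S -> A -> R) (pi : S -> A -> R) (z : bool) : R :=
  (1 - gamma) * \rsum_(t < T) gamma ^ t *
     \rsum_(s : S) \rsum_(a : A) mu_t P pi (Dz D z) t s * pi s a * rho s a.

Definition in_PiDP gamma P D rho (eta : R) (pi : S -> A -> R) : Prop :=
  is_policy pi /\
  Rabs (rhoz gamma P D rho pi maj - rhoz gamma P D rho pi min) <= eta.

Definition in_PiDP_til gamma T P D rho (eta : R) (pi : S -> A -> R) : Prop :=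
  is_policy pi /\
  Rabs (rhoz_til gamma T P D rho pi maj - rhoz_til gamma T P D rho pi min) <= eta.
End Fair.

(* Main.v *)
Require Import Defs.
From Stdlib Require Import Reals Lra Lia ClassicalEpsilon.
From mathcomp Require Import all_boot.
Local Open Scope R_scope.

Section Sums.
Variable I : Type.
Implicit Types (r : seq I) (F G : I -> R).

Lemma sl_mull c r F : c * \big[Rplus/0]_(i <- r) F i = \big[Rplus/0]_(i <- r) (c * F i).
Proof. elim: r => [|x r IH]; rewrite ?big_nil ?big_cons; [ring| rewrite -IH; ring]. Qed.

Lemma sl_mulr c r F : (\big[Rplus/0]_(i <- r) F i) * c = \big[Rplus/0]_(i <- r) (F i * c).
Proof. elim: r => [|x r IH]; rewrite ?big_nil ?big_cons; [ring| rewrite -IH; ring]. Qed.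

Lemma sl_le r F G : (forall i, F i <= G i) ->
  \big[Rplus/0]_(i <- r) F i <= \big[Rplus/0]_(i <- r) G i.
Proof. move=> H; elim: r => [|x r IH]; rewrite ?big_nil ?big_cons; [lra| have := H x; lra]. Qed.

Lemma sl_ge0 r F : (forall i, 0 <= F i) -> 0 <= \big[Rplus/0]_(i <- r) F i.
Proof. move=> H; elim: r => [|x r IH]; rewrite ?big_nil ?big_cons; [lra| have := H x; lra]. Qed.

Lemma sl_abs r F : Rabs (\big[Rplus/0]_(i <- r) F i) <= \big[Rplus/0]_(i <- r) Rabs (F i).
Proof. elim: r => [|x r IH]; rewrite ?big_nil ?big_cons.
- rewrite Rabs_R0; lra.
- have := Rabs_triang (F x) (\big[Rplus/0]_(i <- r) F i); lra. Qed.

Lemma sl_cv r (x : I -> nat -> R) (L : I -> R) :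
  (forall i, Un_cv (x i) (L i)) ->
  Un_cv (fun N => \big[Rplus/0]_(i <- r) x i N) (\big[Rplus/0]_(i <- r) L i).
Proof.
move=> H; elim: r => [|y r IH].
- rewrite big_nil. move=> e He; exists 0%N => n _. rewrite big_nil /R_dist Rminus_0_r Rabs_R0 //.
- rewrite big_cons. have := CV_plus _ _ _ _ (H y) IH.
  apply: Un_cv_ext => n. by rewrite big_cons.
Qed.
End Sums.

Lemma single_le (I : finType) (F : I -> R) j : (forall i, 0 <= F i) -> F j <= \rsum_(i : I) F i.
Proof.
move=> H. rewrite (bigD1 j) //= big_mkcond /=.
have := @sl_ge0 I (index_enum I) (fun i => if i != j then F i else 0).
suff: forall i, 0 <= (if i != j then F i else 0) by move=> /[swap] /[apply]; lra.
move=> i; case: (i != j) => //; lra.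
Qed.

Section MuT.
Variables (S A : finType) (P : S -> A -> S -> R) (pi : S -> A -> R).
Hypothesis HP : is_transition P.
Hypothesis Hpi : is_policy pi.

Lemma Ppi_ge0 s s' : 0 <= Ppi P pi s s'.
Proof. apply: sl_ge0 => a. apply: Rmult_le_pos; [apply Hpi| apply HP]. Qed.

Lemma Ppi_sum s : \rsum_(s' : S) Ppi P pi s s' = 1.
Proof.
rewrite /Ppi exchange_big /=.
rewrite -(proj2 Hpi s). apply: eq_bigr => a _.
by rewrite -sl_mull (proj2 HP s a) Rmult_1_r.
Qed.

Lemma mu_t_dist mu : (forall s, 0 <= mu s) -> \rsum_(s : S) mu s = 1 ->
  forall t, (forall s, 0 <= mu_t P pi mu t s) /\ \rsum_(s : S) mu_t P pi mu t s = 1.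
Proof.
move=> H0 H1; elim=> [|t [IH0 IH1]] //=; split.
- move=> s'; apply: sl_ge0 => s; apply: Rmult_le_pos; [apply IH0|apply Ppi_ge0].
- rewrite exchange_big /= -IH1. apply: eq_bigr => s _.
  by rewrite -sl_mull Ppi_sum Rmult_1_r.
Qed.

Lemma g_bound mu (f : S -> A -> R) C : (forall s, 0 <= mu s) -> \rsum_(s : S) mu s = 1 ->
  (forall s a, Rabs (f s a) <= C) -> forall t,
  Rabs (\rsum_(s : S) \rsum_(a : A) mu_t P pi mu t s * pi s a * f s a) <= C.
Proof.
move=> H0 H1 Hf t; have [M0 M1] := @mu_t_dist mu H0 H1 t.
apply: Rle_trans; first apply: sl_abs.
apply: Rle_trans.
  apply: sl_le => s. apply: sl_abs.
have ->: C = \rsum_(s : S) \rsum_(a : A) mu_t P pi mu t s * pi s a * C.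
  rewrite -[LHS]Rmult_1_l -M1 sl_mulr. apply: eq_bigr => s _.
  rewrite -[LHS]Rmult_1_r -(proj2 Hpi s) sl_mull. by apply: eq_bigr => a _; ring.
apply: sl_le => s; apply: sl_le => a.
rewrite Rabs_mult Rabs_mult (Rabs_pos_eq (mu_t _ _ _ _ _)) ?(Rabs_pos_eq (pi s a)); try apply M0; try apply Hpi.
apply: Rmult_le_compat_l; [apply: Rmult_le_pos; [apply M0|apply Hpi]| apply Hf].
Qed.
End MuT.

Lemma sumf_big u N : sum_f_R0 u N = \rsum_(t < N.+1) u t.
Proof.
elim: N => [|N IH]; first by rewrite big_ord_recr big_ord0 /=; ring.
by rewrite big_ord_recr /= IH.
Qed.

Lemma tail_step gamma C (g : nat -> R) T : 0 < gamma < 1 -> (forall t, Rabs (g t) <= C) -> forall N,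
  (1 - gamma) * Rabs (\rsum_(t < T + N) (gamma ^ t * g t) - \rsum_(t < T) (gamma ^ t * g t))
  <= C * (gamma ^ T - gamma ^ (T + N)).
Proof.
move=> Hg Hb; elim=> [|N IH].
- rewrite addn0 Rminus_diag Rabs_R0 Rminus_diag; lra.
- rewrite addnS big_ord_recr /=.
  set d := (\rsum_(t < T + N) (gamma ^ t * g t) - \rsum_(t < T) (gamma ^ t * g t)) in IH *.
  set x := gamma ^ (T + N) in IH *.
  have Hx : 0 <= x by apply: pow_le; lra.
  have Ha : Rabs (d + x * g (T+N)%N) <= Rabs d + x * C.
    apply: Rle_trans; first apply: Rabs_triang.
    rewrite Rabs_mult (Rabs_pos_eq x) //. have := Hb (T+N)%N. nra.
  have -> : \rsum_(i < T + N) (gamma ^ i * g i) + x * g (T + N)%N -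
     \rsum_(t < T) (gamma ^ t * g t) = d + x * g (T+N)%N by rewrite /d; ring.
  have H2 : (1 - gamma) * Rabs (d + x * g (T + N)%N) <= (1 - gamma) * (Rabs d + x * C).
    apply: Rmult_le_compat_l; lra.
  nra.
Qed.

Lemma cv_bound x L a b N0 : Un_cv x L -> (forall N, le N0 N -> Rabs (x N - a) <= b) ->
  Rabs (L - a) <= b.
Proof.
move=> Hc Hb. destruct (Rle_or_lt (Rabs (L - a)) b) as [h|h] => //.
have [N1 HN1] := Hc (Rabs (L - a) - b) ltac:(lra).
have h1 := HN1 (N0 + N1)%coq_nat ltac:(lia).
have h2 := Hb (N0 + N1)%coq_nat ltac:(lia).
rewrite /R_dist in h1.
have := Rabs_triang (L - x (N0 + N1)%coq_nat) (x (N0 + N1)%coq_nat - a).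
rewrite Rabs_minus_sym in h1.
have -> : L - x (N0 + N1)%coq_nat + (x (N0 + N1)%coq_nat - a) = L - a by ring.
lra.
Qed.

Lemma tail_bound gamma C (g : nat -> R) T L : 0 < gamma < 1 -> (forall t, Rabs (g t) <= C) ->
  Un_cv (fun N => sum_f_R0 (fun t => gamma ^ t * g t) N) L ->
  Rabs (L - \rsum_(t < T) (gamma ^ t * g t)) <= gamma ^ T * C / (1 - gamma).
Proof.
move=> Hg Hb Hc. apply: (@cv_bound _ _ _ _ T Hc) => N /leP HN.
have HT : (T <= N.+1)%N by apply: leqW.
rewrite sumf_big -(subnKC HT).
have h := tail_step gamma C g T Hg Hb (N.+1 - T).
have HC : 0 <= C by have := Hb 0%N; have := Rabs_pos (g 0%N); lra.
have hp : 0 <= gamma ^ (T + (N.+1 - T)) by apply: pow_le; lra.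
apply: (Rmult_le_reg_l (1 - gamma)); first lra.
have -> : (1 - gamma) * (gamma ^ T * C / (1 - gamma)) = gamma ^ T * C by field; lra.
nra.
Qed.

Lemma cv_exists gamma u : 0 < gamma < 1 -> (forall t, 0 <= u t <= gamma ^ t) ->
  exists L, Un_cv (fun N => sum_f_R0 u N) L.
Proof.
move=> Hg Hu.
have [L HL] : {l : R | Un_cv (fun N => sum_f_R0 u N) l}.
  apply: growing_cv.
  - move=> n /=. have := Hu n.+1; lra.
  - exists (/ (1 - gamma)) => y [n ->].
    apply: Rle_trans; first apply: (sum_Rle u (fun i => gamma ^ i)) => i _; first by apply Hu.
    rewrite tech3; last lra.
    have : 0 <= gamma ^ n.+1 by apply: pow_le; lra.
    move=> h. rewrite /Rdiv.
    have : 0 < / (1 - gamma) by apply: Rinv_0_lt_compat; lra.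
    nra.
by exists L.
Qed.

Lemma series_spec u : (exists L, Un_cv (fun N => sum_f_R0 u N) L) ->
  Un_cv (fun N => sum_f_R0 u N) (series u).
Proof. move=> h; rewrite /series; exact: epsilon_spec. Qed.

Lemma cv_const c : Un_cv (fun _ => c) c.
Proof. move=> e He; exists 0%N => n _; rewrite /R_dist Rminus_diag Rabs_R0 //. Qed.

Section Inter.
Variables (S A : finType) (P : S -> A -> S -> R) (pi : S -> A -> R) (mu : S -> R)
  (f : S -> A -> R) (gamma : R).
Hypothesis HP : is_transition P.
Hypothesis Hpi : is_policy pi.
Hypothesis Hmu0 : forall s, 0 <= mu s.
Hypothesis Hmu1 : \rsum_(s : S) mu s = 1.
Hypothesis Hg : 0 < gamma < 1.

Definition gg t := \rsum_(s : S) \rsum_(a : A) mu_t P pi mu t s * pi s a * f s a.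
Definition cc s := \rsum_(a : A) pi s a * f s a.
Definition uu s t := gamma ^ t * mu_t P pi mu t s.

Lemma term_id t : gamma ^ t * gg t = \rsum_(s : S) cc s * uu s t.
Proof.
rewrite /gg sl_mull; apply: eq_bigr => s _.
rewrite /cc sl_mull sl_mulr; apply: eq_bigr => a _; rewrite /uu; ring.
Qed.

Lemma mdp_interchange :
  Un_cv (fun N => sum_f_R0 (fun t => gamma ^ t * gg t) N)
        (\rsum_(s : S) \rsum_(a : A) series (uu s) * pi s a * f s a).
Proof.
have Hu : forall s, Un_cv (fun N => sum_f_R0 (uu s) N) (series (uu s)).
  move=> s; apply: series_spec; apply: (cv_exists gamma (uu s) Hg) => t.
  have [M0 M1] := @mu_t_dist S A P pi HP Hpi mu Hmu0 Hmu1 t.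
  have h1 := @single_le S _ s M0. rewrite M1 in h1.
  have h2 : 0 <= gamma ^ t by apply: pow_le; lra.
  rewrite /uu; split; [apply: Rmult_le_pos => //; apply M0| nra].
have := @sl_cv S (index_enum S) (fun s N => cc s * sum_f_R0 (uu s) N) (fun s => cc s * series (uu s))
  (fun s => CV_mult _ _ _ _ (cv_const (cc s)) (Hu s)).
have -> : \rsum_(s : S) \rsum_(a : A) series (uu s) * pi s a * f s a =
          \big[Rplus/0]_(i <- index_enum S) (cc i * series (uu i)).
  apply: eq_bigr => s _. rewrite /cc sl_mulr; apply: eq_bigr => a _; ring.
apply: Un_cv_ext => N.
elim: N => [|N IH].
- by rewrite /= -(term_id 0).
- rewrite tech5 -IH term_id -big_split /=. apply: eq_bigr => s _; ring.
Qed.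
End Inter.

Lemma abs_le_inv x b: Rabs x <= b -> -b <= x <= b. Proof. intros; split_Rabs; lra. Qed.

Lemma key (S A : finType) (P : S -> A -> S -> R) (pi : S -> A -> R) (mu : S -> R)
  (f : S -> A -> R) (gamma C : R) (T : nat) :
  is_transition P -> is_policy pi -> (forall s, 0 <= mu s) -> \rsum_(s : S) mu s = 1 ->
  0 < gamma < 1 -> (forall s a, Rabs (f s a) <= C) ->
  Rabs (\rsum_(s : S) \rsum_(a : A) series (fun t => gamma ^ t * mu_t P pi mu t s) * pi s a * f s a
   - \rsum_(t < T) (gamma ^ t * \rsum_(s : S) \rsum_(a : A) mu_t P pi mu t s * pi s a * f s a))
  <= gamma ^ T * C / (1 - gamma).
Proof.
move=> HP Hpi H0 H1 Hg Hf.
have h := (@mdp_interchange S A P pi mu f gamma HP Hpi H0 H1 Hg).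
have h2 := (tail_bound gamma C (gg S A P pi mu f) T _ Hg (@g_bound S A P pi HP Hpi mu f C H0 H1 Hf) h).
exact h2.
Qed.

Lemma Dz_dist (St : finType) (D : bool * St -> R) z : is_dist D -> 0 < pz D z ->
  (forall s, 0 <= Dz D z s) /\ \rsum_(s : bool * St) Dz D z s = 1.
Proof.
move=> [HD0 HD1] Hp; split.
- move=> s; rewrite /Dz; case: (s.1 == z); last lra.
  apply: Rmult_le_pos; [apply HD0| apply: Rlt_le; apply: Rinv_0_lt_compat; lra].
- rewrite (eq_bigr (fun p => Dz D z (p.1, p.2))); last by case.
  rewrite -(pair_big xpredT xpredT (fun b s => Dz D z (b, s))) /= big_bool /=.
  have E : forall b, \rsum_(s : St) Dz D z (b, s) = if b == z then 1 else 0.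
    move=> b; rewrite /Dz /=; case: (b == z) /eqP => Hz /=.
    + rewrite -sl_mulr. rewrite Hz. rewrite /pz in Hp *. field; lra.
    + by rewrite big1.
  rewrite !E; case: z Hp E => /= Hp E; lra.
Qed.

Lemma R_close (St A : finType) gamma (D : bool * St -> R) (P : bool * St -> A -> bool * St -> R)
  (Rw : bool * St -> A -> R) Rmax T pi :
  0 < gamma < 1 -> is_dist D -> is_transition P -> is_policy pi ->
  (forall s a, Rabs (Rw s a) <= Rmax) ->
  Rabs (Rval gamma P D Rw pi - Rtil gamma T P D Rw pi) <= gamma ^ T * Rmax / (1 - gamma).
Proof.
move=> Hg [HD0 HD1] HP Hpi HR.
have h := @key _ _ P pi D Rw gamma Rmax T HP Hpi HD0 HD1 Hg HR.
have -> : Rval gamma P D Rw pi = \rsum_(s : bool * St) \rsum_(a : A)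
   series (fun t => gamma ^ t * mu_t P pi D t s) * pi s a * Rw s a.
  rewrite /Rval sl_mull; apply: eq_bigr => s _; rewrite sl_mull; apply: eq_bigr => a _.
  rewrite /Lam /occ. field; lra.
exact h.
Qed.

Lemma rho_close (St A : finType) gamma (D : bool * St -> R) (P : bool * St -> A -> bool * St -> R)
  (rho : bool * St -> A -> R) Rmax T pi z :
  0 < gamma < 1 -> is_dist D -> 0 < pz D z -> is_transition P -> is_policy pi ->
  (forall s a, Rabs (rho s a) <= Rmax) ->
  Rabs (rhoz gamma P D rho pi z - rhoz_til gamma T P D rho pi z) <= gamma ^ T * Rmax / (1 - gamma).
Proof.
move=> Hg HD Hp HP Hpi HR.
have [H0 H1] := @Dz_dist _ D z HD Hp.
have h := @key _ _ P pi (Dz D z) rho gamma Rmax T HP Hpi H0 H1 Hg HR.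
have -> : rhoz gamma P D rho pi z = (1 - gamma) * \rsum_(s : bool * St) \rsum_(a : A)
   series (fun t => gamma ^ t * mu_t P pi (Dz D z) t s) * pi s a * rho s a.
  rewrite /rhoz sl_mull; apply: eq_bigr => s _; rewrite sl_mull; apply: eq_bigr => a _.
  rewrite /occ. ring.
rewrite /rhoz_til -Rmult_minus_distr_l Rabs_mult Rabs_pos_eq; last lra.
have hb : 0 <= gamma ^ T * Rmax / (1 - gamma).
  apply: Rle_trans h; apply: Rabs_pos.
have : (1 - gamma) * Rabs (\rsum_(s : bool * St) \rsum_(a : A)
   series (fun t => gamma ^ t * mu_t P pi (Dz D z) t s) * pi s a * rho s a -
   \rsum_(t < T) (gamma ^ t * \rsum_(s : bool * St) \rsum_(a : A) mu_t P pi (Dz D z) t s * pi s a * rho s a))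
   <= 1 * (gamma ^ T * Rmax / (1 - gamma)).
  apply: Rmult_le_compat; [lra|apply: Rabs_pos|lra|exact h].
lra.
Qed.

Theorem theorem5 (St A : finType) (gamma : R) (D : bool * St -> R)
  (P : bool * St -> A -> bool * St -> R) (Rw rho : bool * St -> A -> R)
  (Rmax eps sigma : R) (T : nat) (pistar pitil : bool * St -> A -> R) :
  0 < gamma < 1 ->
  is_dist D -> is_transition P ->
  0 < pz D maj -> 0 < pz D min ->
  0 < Rmax ->
  (forall s a, Rabs (Rw s a) <= Rmax) ->
  (forall s a, Rabs (rho s a) <= Rmax) ->
  0 < eps -> 0 < sigma <= / 2 ->
  (0 < T)%nat ->
  gamma ^ T * Rmax / (1 - gamma) <= sigma ^ 2 * eps / 4 ->
  in_PiDP gamma P D rho ((1 - sigma) ^ 2 * eps) pistar ->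
  (forall pi, in_PiDP gamma P D rho ((1 - sigma) ^ 2 * eps) pi ->
     Rval gamma P D Rw pi <= Rval gamma P D Rw pistar) ->
  in_PiDP_til gamma T P D rho ((1 - sigma) * eps) pitil ->
  (forall pi, in_PiDP_til gamma T P D rho ((1 - sigma) * eps) pi ->
     Rtil gamma T P D Rw pi <= Rtil gamma T P D Rw pitil) ->
  in_PiDP gamma P D rho eps pitil /\
  Rval gamma P D Rw pistar - Rval gamma P D Rw pitil <= sigma ^ 2 * eps / 2.
Proof.
move=> Hg HD HP Hpmaj Hpmin HRm HRw Hrho Heps Hsig HT Htr [Hps Hps2] _ [Hpt Hpt2] Hopt.
set d := gamma ^ T * Rmax / (1 - gamma) in Htr.
have Hse : 0 < sigma * eps by nra.
have Hs1 : sigma ^ 2 * eps <= sigma * eps / 2.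
  have h : 0 <= (/ 2 - sigma) * (sigma * eps) by apply: Rmult_le_pos; lra.
  nra.
have Hs2 : (1 - sigma) ^ 2 * eps = eps - 2 * (sigma * eps) + sigma ^ 2 * eps by ring.
have rs1 := abs_le_inv _ _ (@rho_close _ _ gamma D P rho Rmax T pistar maj Hg HD Hpmaj HP Hps Hrho).
have rs2 := abs_le_inv _ _ (@rho_close _ _ gamma D P rho Rmax T pistar min Hg HD Hpmin HP Hps Hrho).
have rt1 := abs_le_inv _ _ (@rho_close _ _ gamma D P rho Rmax T pitil maj Hg HD Hpmaj HP Hpt Hrho).
have rt2 := abs_le_inv _ _ (@rho_close _ _ gamma D P rho Rmax T pitil min Hg HD Hpmin HP Hpt Hrho).
have Rs := abs_le_inv _ _ (@R_close _ _ gamma D P Rw Rmax T pistar Hg HD HP Hps HRw).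
have Rt := abs_le_inv _ _ (@R_close _ _ gamma D P Rw Rmax T pitil Hg HD HP Hpt HRw).
rewrite -/d in rs1 rs2 rt1 rt2 Rs Rt.
have hs := abs_le_inv _ _ Hps2. have ht := abs_le_inv _ _ Hpt2.
split.
- split => //; apply: Rabs_le; lra.
- have Hin : in_PiDP_til gamma T P D rho ((1 - sigma) * eps) pistar.
    split => //; apply: Rabs_le; lra.
  have := Hopt _ Hin. lra.
Qed.
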